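(* Let $\{M_p\mid p\in P\}$ be a Morse decomposition of a multivector field on a finite simplicial complex $K$, with associated $P$-filtered chain complex $(C,d)$, let $(\bar C,\bar d)$ be a Conley complex of $(C,d)$, let $f:K\to\mathbb R$ be Lyapunov for the Morse decomposition, and let $P_f$ be an $f$-compatible order. Then the persistence modules $H(\mathbf C,P_f)$ and $H(\bar{\mathbf C},P_f)$ are isomorphic.
   Context: $K$ is a finite simplicial complex; a multivector field $\mathcal V$ on $K$ is a partition of $K$ into convex sets $V$ (if $\sigma,\tau\in V$ and $\sigma\le\mu\le\tau$ in the face order then $\mu\in V$); $F_{\mathcal V}(\sigma)=[\sigma]_{\mathcal V}\cup\{\tau:\tau\le\sigma\}$ where $[\sigma]_{\mathcal V}$ is the part containing $\sigma$; a path is a sequence $\sigma_1,\dots,\sigma_r$ with $\sigma_k\in F_{\mathcal V}(\sigma_{k-1})$. A Morse decomposition indexed by a finite poset $(P,\le_P)$ is a partition $K=\bigsqcup_{p\in P}M_p$ such that every path from $M_p$ to $M_q$ has $q\le_P p$. Let $m=|P|$. $(C,d)$: $C_p$ is the $\mathbb Z_2$-span of the simplices in $M_p$ (graded by dimension), $C=\bigoplus_pC_p$ the simplicial chains of $K$ over $\mathbb Z_2$, $d$ the simplicial boundary. For $P$-graded spaces and a linear map $h$, $h_{pq}=\pi_p h\iota_q$, and $h$ is $P$-filtered if $h_{pq}\ne0\Rightarrow p\le_P q$. A $P$-filtered chain complex is a $\mathbb Z_2$ chain complex with a $P$-gradation (compatible with degree) whose differential is $P$-filtered. Filtered chain maps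 are $P$-filtered chain maps; filtered chain maps $\varphi,\psi$ are filtered chain homotopic if $\psi-\varphi=d'S+Sd$ for some $P$-filtered degree-raising-by-one linear $S$; two $P$-filtered complexes are filtered chain homotopic if there are filtered chain maps $\varphi,\varphi'$ between them with $\varphi'\varphi$ and $\varphi\varphi'$ filtered chain homotopic to the identities. A Conley complex of $(C,d)$ is a $P$-filtered chain complex $(\bar C,\bar d)$ filtered chain homotopic to $(C,d)$ with $\bar d_{pp}=0$ for all $p$. $f:K\to\mathbb R$ is Lyapunov if $f$ is constant on each $M_p$, with value $f(p)$, and $p\le_P q\Rightarrow f(p)\le f(q)$. An $f$-compatible order $P_f$ is an enumeration $p_1,\dots,p_m$ of $P$ that is a linear extension of $\le_P$ with $f(p_1)\le\dots\le f(p_m)$. For a $P$-filtered chain complex $(D,\delta)$, $\mathbf D_{p_i}=\bigoplus_{j\le i}D_{p_j}$ with the restricted differential is a subcomplex, and $H(\mathbf D,P_f)$ is the persistence module $H_*(\mathbf D_{p_1})\to\dots\to H_*(\mathbf D_{p_m})$ with maps induced by inclusions; this applies to $(C,d)$ giving $H(\mathbf C,P_f)$ and to $(\bar C,\bar d)$ giving $H(\bar{\mathbf C},P_f)$. *)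

(* Defs.v *)
From Stdlib Require Import Reals.
From HB Require Import structures.
From mathcomp Require Import all_boot all_order all_algebra.

Set Implicit Arguments.
Unset Strict Implicit.
Unset Printing Implicit Defensive.

Import Order.TTheory GRing.Theory.
Local Open Scope ring_scope.

Section Combinatorics.
Variable V : finType.

Definition is_simplicial_complex (K : {set {set V}}) : Prop :=
  (forall s, s \in K -> s != set0) /\
  (forall s t, s \in K -> t != set0 -> t \subset s -> t \in K).

Definition is_multivector_field (K : {set {set V}}) (mv : {set {set {set V}}})
  : Prop :=
  partition mv K /\
  (forall A, A \in mv -> forall s u t : {set V},
      s \in A -> t \in A -> s \subset u -> u \subset t -> u \in A).

Definition Fmv (K : {set {set V}}) (mv : {set {set {set V}}}) (s : {set V})
  : {set {set V}} :=
  pblock mv s :|: [set t in K | t \subset s].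

Definition mv_path (K : {set {set V}}) (mv : {set {set {set V}}})
  (s : {set V}) (rest : seq {set V}) : bool :=
  path (fun a b => b \in Fmv K mv a) s rest.

(* A P-indexed partition of K is encoded by the index map mi : simplex -> P;
   the Morse set M_p is { s in K | mi s = p }. *)
Definition Morse_set (d : Order.disp_t) (P : finPOrderType d)
  (K : {set {set V}}) (mi : {set V} -> P) (p : P) : {set {set V}} :=
  [set s in K | mi s == p].

Definition is_Morse_decomposition (d : Order.disp_t) (P : finPOrderType d)
  (K : {set {set V}}) (mv : {set {set {set V}}}) (mi : {set V} -> P) : Prop :=
  (forall p, Morse_set K mi p != set0) /\
  (forall p q s rest, s \in Morse_set K mi p ->
      last s rest \in Morse_set K mi q -> mv_path K mv s rest -> (q <= p)%O).

Definition is_Lyapunov (d : Order.disp_t) (P : finPOrderType d)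
  (K : {set {set V}}) (mi : {set V} -> P) (f : {set V} -> R) (fP : P -> R)
  : Prop :=
  (forall p s, s \in Morse_set K mi p -> f s = fP p) /\
  (forall p q, (p <= q)%O -> Rle (fP p) (fP q)).

End Combinatorics.

(* f-compatible order: the enumeration p_1, ..., p_m of P is the sequence s,
   p_i being the element of index i-1 in s. *)
Definition f_compatible (d : Order.disp_t) (P : finPOrderType d)
  (fP : P -> R) (s : seq P) : Prop :=
  uniq s /\ (forall p, p \in s) /\
  (forall p q, (p <= q)%O -> (index p s <= index q s)%N) /\
  (forall p q, (index p s <= index q s)%N -> Rle (fP p) (fP q)).

(* A (finite-dimensional) P-filtered chain complex over Z_2 is given by a
   finite homogeneous basis B, a degree deg : B -> int, a grade gr : B -> P
   and a differential given by its matrix dB : B -> B -> 'F_2, where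
   dB x y is the coefficient of x in the image of y.  Linear maps between
   such spaces are given likewise by matrices (kernels). *)

Definition kcomp (B'' B' B : finType) (g : B'' -> B' -> 'F_2)
  (h : B' -> B -> 'F_2) : B'' -> B -> 'F_2 :=
  fun x y => \sum_(z : B') g x z * h z y.

Definition kid (B : finType) : B -> B -> 'F_2 := fun x y => (x == y)%:R.

Section Filtered.
Variables (d : Order.disp_t) (P : finPOrderType d).

Definition is_Pfiltered_complex (B : finType) (deg : B -> int) (gr : B -> P)
  (dB : B -> B -> 'F_2) : Prop :=
  (forall x y, dB x y != 0 -> deg y = deg x + 1) /\
  (forall x y, dB x y != 0 -> (gr x <= gr y)%O) /\
  (forall x y, kcomp dB dB x y = 0).

Definition is_filtered_chain_map (B B' : finType)
  (deg : B -> int) (gr : B -> P) (dB : B -> B -> 'F_2)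
  (deg' : B' -> int) (gr' : B' -> P) (dB' : B' -> B' -> 'F_2)
  (phi : B' -> B -> 'F_2) : Prop :=
  (forall x y, phi x y != 0 -> deg' x = deg y) /\
  (forall x y, phi x y != 0 -> (gr' x <= gr y)%O) /\
  (forall x y, kcomp dB' phi x y = kcomp phi dB x y).

Definition filtered_chain_homotopic_maps (B B' : finType)
  (deg : B -> int) (gr : B -> P) (dB : B -> B -> 'F_2)
  (deg' : B' -> int) (gr' : B' -> P) (dB' : B' -> B' -> 'F_2)
  (phi psi : B' -> B -> 'F_2) : Prop :=
  exists S : B' -> B -> 'F_2,
    (forall x y, S x y != 0 -> deg' x = deg y + 1) /\
    (forall x y, S x y != 0 -> (gr' x <= gr y)%O) /\
    (forall x y, psi x y - phi x y = kcomp dB' S x y + kcomp S dB x y).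

Definition filtered_chain_homotopic_complexes (B B' : finType)
  (deg : B -> int) (gr : B -> P) (dB : B -> B -> 'F_2)
  (deg' : B' -> int) (gr' : B' -> P) (dB' : B' -> B' -> 'F_2) : Prop :=
  exists (phi : B' -> B -> 'F_2) (phi' : B -> B' -> 'F_2),
    is_filtered_chain_map deg gr dB deg' gr' dB' phi /\
    is_filtered_chain_map deg' gr' dB' deg gr dB phi' /\
    filtered_chain_homotopic_maps deg gr dB deg gr dB (@kid B) (kcomp phi' phi) /\
    filtered_chain_homotopic_maps deg' gr' dB' deg' gr' dB' (@kid B') (kcomp phi phi').

Definition is_Conley_complex (B Bb : finType)
  (deg : B -> int) (gr : B -> P) (dB : B -> B -> 'F_2)
  (degb : Bb -> int) (grb : Bb -> P) (db : Bb -> Bb -> 'F_2) : Prop :=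
  is_Pfiltered_complex degb grb db /\
  filtered_chain_homotopic_complexes deg gr dB degb grb db /\
  (forall x y, grb x = grb y -> db x y = 0).

Section Homology.
Variables (s : seq P) (B : finType) (deg : B -> int) (gr : B -> P)
  (dB : B -> B -> 'F_2).

Notation chain := {ffun B -> 'F_2}.

Definition kapp (c : chain) : chain := [ffun x => \sum_y dB x y * c y].

(* degree-n chains of the subcomplex D_{p_(i+1)} = sum_{j <= i} D_{s_j} *)
Definition sub_chains (i : nat) (n : int) : {set chain} :=
  [set c : chain | [forall b, (c b != 0) ==>
                      ((index (gr b) s <= i)%N && (deg b == n))]].

Definition cycles (i : nat) (n : int) : {set chain} :=
  [set c in sub_chains i n | kapp c == 0].

Definition boundaries (i : nat) (n : int) : {set chain} :=
  [set kapp e | e in sub_chains i (n + 1)].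

(* homology H_n(D_{p_(i+1)}) as the set of cosets z + B_n *)
Definition homology (i : nat) (n : int) : {set {set chain}} :=
  [set [set z + b | b : chain in boundaries i n] | z : chain in cycles i n].

End Homology.

Definition csum (B : finType) (X Y : {set {ffun B -> 'F_2}}) :
  {set {ffun B -> 'F_2}} := [set x + y | x : {ffun B -> 'F_2} in X, y : {ffun B -> 'F_2} in Y].

(* Isomorphism of the persistence modules H(D, P_f) and H(Db, P_f):
   for each index i < m and degree n, an additive (= Z_2-linear) bijection
   alpha i n : H_n(D_{p_(i+1)}) -> H_n(Db_{p_(i+1)}), commuting with the maps
   induced by the inclusions D_{p_(i+1)} -> D_{p_(i+2)} (which send the class
   X to the class X + B_n(D_{p_(i+2)})). *)
Definition pm_isomorphic (s : seq P) (B Bb : finType)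
  (deg : B -> int) (gr : B -> P) (dB : B -> B -> 'F_2)
  (degb : Bb -> int) (grb : Bb -> P) (db : Bb -> Bb -> 'F_2) : Prop :=
  exists alpha : nat -> int -> {set {ffun B -> 'F_2}} -> {set {ffun Bb -> 'F_2}},
    (forall i n, (i < size s)%N ->
       (forall X, X \in homology s deg gr dB i n ->
                  alpha i n X \in homology s degb grb db i n) /\
       (forall X Y, X \in homology s deg gr dB i n ->
                    Y \in homology s deg gr dB i n ->
                    alpha i n X = alpha i n Y -> X = Y) /\
       (forall Y, Y \in homology s degb grb db i n ->
                  exists2 X, X \in homology s deg gr dB i n & alpha i n X = Y) /\
       (forall X Y, X \in homology s deg gr dB i n ->
                    Y \in homology s deg gr dB i n ->
                    alpha i n (csum X Y) = csum (alpha i n X) (alpha i n Y))) /\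
    (forall i n, (i.+1 < size s)%N ->
       forall X, X \in homology s deg gr dB i n ->
         alpha i.+1 n (csum X (boundaries s deg gr dB i.+1 n)) =
         csum (alpha i n X) (boundaries s degb grb db i.+1 n)).

End Filtered.

Section Simplicial.
Variables (V : finType) (K : {set {set V}}).

Definition simp : finType := {s : {set V} | s \in K}.

Definition simp_deg (x : simp) : int := ((#|val x|).-1)%:Z.

Definition simp_gr (d : Order.disp_t) (P : finPOrderType d)
  (mi : {set V} -> P) (x : simp) : P := mi (val x).

Definition simp_bd (x y : simp) : 'F_2 :=
  ((val x \subset val y) && (#|val y| == (#|val x|).+1)%N)%:R.

End Simplicial.

(* Main.v *)
Require Import Defs.
From Stdlib Require Import Reals.
From HB Require Import structures.
From mathcomp Require Import all_boot all_order all_algebra.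
Set Implicit Arguments.
Unset Strict Implicit.
Unset Printing Implicit Defensive.
Import Order.TTheory GRing.Theory.
Local Open Scope ring_scope.

Definition mapp (B' B : finType) (M : B' -> B -> 'F_2) (c : {ffun B -> 'F_2})
  : {ffun B' -> 'F_2} := [ffun x => \sum_y M x y * c y].

Lemma kappE (B : finType) (dB : B -> B -> 'F_2) c : kapp dB c = mapp dB c.
Proof. by []. Qed.

Lemma mappD (B' B : finType) (M : B' -> B -> 'F_2) c1 c2 :
  mapp M (c1 + c2) = mapp M c1 + mapp M c2.
Proof.
apply/ffunP=> x; rewrite !ffunE -big_split /=; apply: eq_bigr => y _.
by rewrite ffunE mulrDr.
Qed.

Lemma mappN (B' B : finType) (M : B' -> B -> 'F_2) c :
  mapp M (- c) = - mapp M c.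
Proof.
apply/ffunP=> x; rewrite !ffunE -sumrN; apply: eq_bigr => y _.
by rewrite ffunE mulrN.
Qed.

Lemma mapp0 (B' B : finType) (M : B' -> B -> 'F_2) : mapp M 0 = 0.
Proof.
by apply/ffunP=> x; rewrite !ffunE big1 // => y _; rewrite ffunE mulr0.
Qed.

Lemma mappB (B' B : finType) (M : B' -> B -> 'F_2) c1 c2 :
  mapp M (c1 - c2) = mapp M c1 - mapp M c2.
Proof. by rewrite mappD mappN. Qed.

Lemma mapp_comp (B'' B' B : finType) (A : B'' -> B' -> 'F_2)
  (N : B' -> B -> 'F_2) c :
  mapp (kcomp A N) c = mapp A (mapp N c).
Proof.
apply/ffunP=> x; rewrite !ffunE /kcomp.
under eq_bigr do rewrite big_distrl.
rewrite exchange_big /=; apply: eq_bigr => z _.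
by rewrite ffunE big_distrr /=; apply: eq_bigr => y _; rewrite mulrA.
Qed.

Lemma mapp_id (B : finType) c : mapp (@kid B) c = c.
Proof.
apply/ffunP=> x; rewrite ffunE (bigD1 x) //= big1 ?addr0 /kid ?eqxx ?mul1r //.
by move=> y /negbTE; rewrite eq_sym => ->; rewrite mul0r.
Qed.

Lemma mapp_eq (B' B : finType) (A A' : B' -> B -> 'F_2) c :
  (forall x y, A x y = A' x y) -> mapp A c = mapp A' c.
Proof. by move=> H; apply/ffunP=> x; rewrite !ffunE; apply: eq_bigr => y _; rewrite H. Qed.

Lemma mapp_homot (B' B : finType) (A I C D : B' -> B -> 'F_2) c :
  (forall x y, A x y - I x y = C x y + D x y) ->
  mapp A c - mapp I c = mapp C c + mapp D c.
Proof.
move=> H; apply/ffunP=> x; rewrite !ffunE -sumrB -big_split /=.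
by apply: eq_bigr => y _; rewrite -mulrBl -mulrDl H.
Qed.

Lemma mapp_chain (B' B : finType) (dB' : B' -> B' -> 'F_2) (dB : B -> B -> 'F_2)
  (phi : B' -> B -> 'F_2) c :
  (forall x y, kcomp dB' phi x y = kcomp phi dB x y) ->
  mapp dB' (mapp phi c) = mapp phi (mapp dB c).
Proof. by move=> H; rewrite -!mapp_comp; apply: mapp_eq. Qed.

Lemma sub_chainsP (dd : Order.disp_t) (P : finPOrderType dd) (s : seq P)
  (B : finType) (deg : B -> int) (gr : B -> P) i n (c : {ffun B -> 'F_2}) :
  reflect (forall b, c b != 0 -> (index (gr b) s <= i)%N /\ deg b = n)
    (c \in sub_chains s deg gr i n).
Proof.
rewrite inE; apply: (iffP forallP) => H b.
  by move=> nz; move: (H b); rewrite nz /= => /andP [-> /eqP].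
by apply/implyP => /H [-> ->]; rewrite eqxx.
Qed.

Lemma mapp_sub (dd : Order.disp_t) (P : finPOrderType dd) (s : seq P)
  (B' B : finType) (deg' : B' -> int) (gr' : B' -> P)
  (deg : B -> int) (gr : B -> P) (M : B' -> B -> 'F_2) (k : int) i n n' (c : {ffun B -> 'F_2}) :
  (forall x y, M x y != 0 -> deg' x = deg y + k) ->
  (forall x y, M x y != 0 -> (index (gr' x) s <= index (gr y) s)%N) ->
  n' = n + k ->
  c \in sub_chains s deg gr i n -> mapp M c \in sub_chains s deg' gr' i n'.
Proof.
move=> Hd Hg -> /sub_chainsP Hc; apply/sub_chainsP => x.
rewrite ffunE => nz.
have [y _ nzy] : exists2 y, true & M x y * c y != 0.
  apply/exists_inP; apply: contraR nz => /exists_inPn H.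
  by apply/eqP; apply: big1 => y _; move: (H y isT); rewrite negbK => /eqP.
have nzM : M x y != 0 by apply: contraNneq nzy => ->; rewrite mul0r.
have nzc : c y != 0 by apply: contraNneq nzy => ->; rewrite mulr0.
have [Hi Hn] := Hc y nzc.
by split; [apply: leq_trans (Hg _ _ nzM) Hi | rewrite (Hd _ _ nzM) Hn].
Qed.

Lemma sub0 (dd : Order.disp_t) (P : finPOrderType dd) (s : seq P)
  (B : finType) (deg : B -> int) (gr : B -> P) i n :
  0 \in sub_chains s deg gr i n.
Proof. by apply/sub_chainsP => b; rewrite ffunE eqxx. Qed.

Lemma subD (dd : Order.disp_t) (P : finPOrderType dd) (s : seq P)
  (B : finType) (deg : B -> int) (gr : B -> P) i n c1 c2 :
  c1 \in sub_chains s deg gr i n -> c2 \in sub_chains s deg gr i n ->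
  c1 + c2 \in sub_chains s deg gr i n.
Proof.
move=> /sub_chainsP H1 /sub_chainsP H2; apply/sub_chainsP => b.
rewrite ffunE; have [/H1 //|/negPn/eqP ->] := boolP (c1 b != 0).
by rewrite add0r => /H2.
Qed.

Lemma subN (dd : Order.disp_t) (P : finPOrderType dd) (s : seq P)
  (B : finType) (deg : B -> int) (gr : B -> P) i n (c : {ffun B -> 'F_2}) :
  c \in sub_chains s deg gr i n -> - c \in sub_chains s deg gr i n.
Proof.
move=> /sub_chainsP H; apply/sub_chainsP => b.
by rewrite ffunE oppr_eq0 => /H.
Qed.

Lemma subS (dd : Order.disp_t) (P : finPOrderType dd) (s : seq P)
  (B : finType) (deg : B -> int) (gr : B -> P) i n (c : {ffun B -> 'F_2}) :
  c \in sub_chains s deg gr i n -> c \in sub_chains s deg gr i.+1 n.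
Proof.
move=> /sub_chainsP H; apply/sub_chainsP => b /H [? ?]; split => //.
exact: leqW.
Qed.

Definition isgrp (B : finType) (H : {set {ffun B -> 'F_2}}) : Prop :=
  [/\ 0 \in H, (forall a b, a \in H -> b \in H -> a + b \in H) &
      (forall a, a \in H -> - a \in H)].

Lemma bd_grp (dd : Order.disp_t) (P : finPOrderType dd) (s : seq P)
  (B : finType) (deg : B -> int) (gr : B -> P) dB i n :
  isgrp (boundaries s deg gr dB i n).
Proof.
split.
- by apply/imsetP; exists 0; [apply: sub0 | rewrite kappE mapp0].
- move=> a b /imsetP [e1 H1 ->] /imsetP [e2 H2 ->]; apply/imsetP.
  by exists (e1 + e2); [apply: subD | rewrite !kappE mappD].
- move=> a /imsetP [e1 H1 ->]; apply/imsetP.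
  by exists (- e1); [apply: subN | rewrite !kappE mappN].
Qed.

Lemma bdS (dd : Order.disp_t) (P : finPOrderType dd) (s : seq P)
  (B : finType) (deg : B -> int) (gr : B -> P) dB i n :
  boundaries s deg gr dB i n \subset boundaries s deg gr dB i.+1 n.
Proof.
apply/subsetP => a /imsetP [e H ->]; apply/imsetP; exists e => //.
exact: subS.
Qed.

Lemma coset_eq (B : finType) (H : {set {ffun B -> 'F_2}}) (z w : {ffun B -> 'F_2}) :
  isgrp H -> z - w \in H ->
  [set z + b | b in H] = [set w + b | b in H].
Proof.
move=> [H0 HD HN] Hzw; apply/setP => x; apply/imsetP/imsetP => [[b Hb ->]|[b Hb ->]].
  by exists ((z - w) + b); [apply: HD | rewrite addrA [w + _]addrC subrK].
exists (- (z - w) + b); [by apply: HD => //; apply: HN |].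
by rewrite addrA opprB [z + _]addrC subrK.
Qed.

Lemma coset_eq_inv (B : finType) (H : {set {ffun B -> 'F_2}}) (z w : {ffun B -> 'F_2}) :
  isgrp H -> [set z + b | b in H] = [set w + b | b in H] -> z - w \in H.
Proof.
move=> [H0 HD HN] E.
have : z \in [set z + b | b in H] by apply/imsetP; exists 0 => //; rewrite addr0.
by rewrite E => /imsetP [b Hb ->]; rewrite addrC addKr.
Qed.

Lemma csum_cosets (B : finType) (H : {set {ffun B -> 'F_2}}) (z w : {ffun B -> 'F_2}) :
  isgrp H ->
  csum [set z + b | b in H] [set w + b | b in H] = [set (z + w) + b | b in H].
Proof.
move=> [H0 HD HN]; apply/setP => x; apply/imset2P/imsetP.
  move=> [a c /imsetP [b1 Hb1 ->] /imsetP [b2 Hb2 ->] ->].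
  by exists (b1 + b2); [apply: HD | rewrite addrACA].
move=> [b Hb ->]; exists (z + b) (w + 0).
- by apply/imsetP; exists b.
- by apply/imsetP; exists 0.
by rewrite addr0 addrAC.
Qed.

Lemma csum_sub (B : finType) (H : {set {ffun B -> 'F_2}}) (A : {set {ffun B -> 'F_2}}) (w : {ffun B -> 'F_2}) :
  isgrp H -> w \in A -> A \subset [set w + b | b in H] ->
  csum A H = [set w + b | b in H].
Proof.
move=> [H0 HD HN] wA /subsetP sA; apply/setP => x; apply/imset2P/imsetP.
  move=> [a c /sA /imsetP [b1 Hb1 ->] Hc ->].
  by exists (b1 + c); [apply: HD | rewrite addrA].
by move=> [b Hb ->]; exists w b.
Qed.


Lemma homP (dd : Order.disp_t) (P : finPOrderType dd) (s : seq P)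
  (B : finType) (deg : B -> int) (gr : B -> P) dB i n X :
  X \in homology s deg gr dB i n ->
  exists2 z, z \in cycles s deg gr dB i n &
     X = [set z + b | b in boundaries s deg gr dB i n].
Proof. by move=> /imsetP [z Hz ->]; exists z. Qed.

Lemma cycP (dd : Order.disp_t) (P : finPOrderType dd) (s : seq P)
  (B : finType) (deg : B -> int) (gr : B -> P) dB i n (z : {ffun B -> 'F_2}) :
  reflect (z \in sub_chains s deg gr i n /\ mapp dB z = 0)
    (z \in cycles s deg gr dB i n).
Proof.
apply: (iffP idP) => [|[H1 /eqP H2]].
  by rewrite /cycles inE => /andP [H1 /eqP H2].
by rewrite /cycles inE H1 H2.
Qed.

Lemma main_gen (dd : Order.disp_t) (P : finPOrderType dd) (s : seq P)
  (B Bb : finType) (deg : B -> int) (gr : B -> P) (dB : B -> B -> 'F_2)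
  (degb : Bb -> int) (grb : Bb -> P) (db : Bb -> Bb -> 'F_2) :
  (forall p q : P, (p <= q)%O -> (index p s <= index q s)%N) ->
  filtered_chain_homotopic_complexes deg gr dB degb grb db ->
  pm_isomorphic s deg gr dB degb grb db.
Proof.
move=> Hidx [phi [phi' [Hph [Hph' [HS HS']]]]].
case: Hph => phD [phG phC].
case: Hph' => ph'D [ph'G ph'C].
case: HS => S [SD [SG SE]].
case: HS' => S' [S'D [S'G S'E]].
have phsub : forall i n c, c \in sub_chains s deg gr i n ->
    mapp phi c \in sub_chains s degb grb i n.
  move=> i n c; apply: (@mapp_sub _ _ _ _ _ _ _ _ _ _ 0) => [x y /phD ->|x y /phG /Hidx //|].
    by rewrite addr0. by rewrite addr0.
have ph'sub : forall i n c, c \in sub_chains s degb grb i n ->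
    mapp phi' c \in sub_chains s deg gr i n.
  move=> i n c; apply: (@mapp_sub _ _ _ _ _ _ _ _ _ _ 0) => [x y /ph'D ->|x y /ph'G /Hidx //|].
    by rewrite addr0. by rewrite addr0.
have Ssub : forall i n c, c \in sub_chains s deg gr i n ->
    mapp S c \in sub_chains s deg gr i (n + 1).
  move=> i n c; apply: (@mapp_sub _ _ _ _ _ _ _ _ _ _ 1) => [x y /SD ->|x y /SG /Hidx //|] //.
have S'sub : forall i n c, c \in sub_chains s degb grb i n ->
    mapp S' c \in sub_chains s degb grb i (n + 1).
  move=> i n c; apply: (@mapp_sub _ _ _ _ _ _ _ _ _ _ 1) => [x y /S'D ->|x y /S'G /Hidx //|] //.
have phcyc : forall i n z, z \in cycles s deg gr dB i n ->
    mapp phi z \in cycles s degb grb db i n.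
  move=> i n z /cycP [Hz Hd]; apply/cycP; split; first exact: phsub.
  by rewrite (mapp_chain _ phC) Hd mapp0.
pose alpha i n (X : {set {ffun B -> 'F_2}}) :=
  csum [set mapp phi x | x in X] (boundaries s degb grb db i n).
have alphaE : forall i n z, z \in cycles s deg gr dB i n ->
    alpha i n [set z + b | b in boundaries s deg gr dB i n] =
    [set mapp phi z + b | b in boundaries s degb grb db i n].
  move=> i n z Hz; apply: csum_sub; first exact: bd_grp.
    by apply/imsetP; exists z => //; apply/imsetP; exists 0;
      [case: (bd_grp s deg gr dB i n) | rewrite addr0].
  apply/subsetP => x /imsetP [y /imsetP [b /imsetP [e He ->] ->] ->].
  apply/imsetP; exists (mapp db (mapp phi e)); last first.
    by rewrite mappD kappE (mapp_chain _ phC).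
  by apply/imsetP; exists (mapp phi e) => //; apply: phsub.
exists alpha; split.
- move=> i n _; split; [|split; [|split]].
  + move=> X /homP [z Hz ->]; rewrite alphaE //.
    by apply/imsetP; exists (mapp phi z) => //; apply: phcyc.
  + move=> X Y /homP [z Hz ->] /homP [w Hw ->]; rewrite !alphaE //.
    move=> /coset_eq_inv E; apply: coset_eq; first exact: bd_grp.
    have /E : isgrp (boundaries s degb grb db i n) by apply: bd_grp.
    rewrite -mappB => /imsetP [e He Ee].
    move: Hz Hw => /cycP [Hz Hdz] /cycP [Hw Hdw].
    set u := z - w.
    have Hu : u \in sub_chains s deg gr i n by apply: subD => //; apply: subN.
    have Hdu : mapp dB u = 0 by rewrite mappB Hdz Hdw subrr.
    have H := mapp_homot u SE.
    rewrite mapp_id !mapp_comp Hdu mapp0 addr0 Ee kappE -(mapp_chain _ ph'C) in H.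
    apply/imsetP; exists (mapp phi' e - mapp S u).
      by apply: subD; [apply: ph'sub | apply: subN; apply: Ssub].
    by rewrite kappE mappB -H opprB addrC subrK.
  + move=> Y /homP [w Hw ->].
    have Hw' := Hw; move: Hw' => /cycP [Hws Hwd].
    have Hc : mapp phi' w \in cycles s deg gr dB i n.
      by apply/cycP; split; [apply: ph'sub | rewrite (mapp_chain _ ph'C) Hwd mapp0].
    exists [set mapp phi' w + b | b in boundaries s deg gr dB i n].
      by apply/imsetP; exists (mapp phi' w).
    rewrite alphaE //; apply: coset_eq; first exact: bd_grp.
    have H := mapp_homot w S'E.
    rewrite mapp_id !mapp_comp Hwd mapp0 addr0 in H.
    by rewrite H; apply/imsetP; exists (mapp S' w) => //; apply: S'sub.
  + move=> X Y /homP [z Hz ->] /homP [w Hw ->].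
    rewrite csum_cosets; last exact: bd_grp.
    have Hzw : z + w \in cycles s deg gr dB i n.
      move: Hz Hw => /cycP [Hz Hdz] /cycP [Hw Hdw].
      by apply/cycP; split; [apply: subD | rewrite mappD Hdz Hdw addr0].
    rewrite !alphaE // mappD csum_cosets //; exact: bd_grp.
- move=> i n _ X /homP [z Hz ->].
  have Hz1 : z \in cycles s deg gr dB i.+1 n.
    by move: Hz => /cycP [Hz Hd]; apply/cycP; split => //; apply: subS.
  rewrite (@csum_sub _ _ _ z); first last.
  + apply/subsetP => x /imsetP [b Hb ->]; apply/imsetP; exists b => //.
    exact: (subsetP (bdS _ _ _ _ _ _)).
  + by apply/imsetP; exists 0; [case: (bd_grp s deg gr dB i n) | rewrite addr0].
  + exact: bd_grp.
  rewrite !alphaE //; apply/esym/csum_sub; first exact: bd_grp.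
    by apply/imsetP; exists 0; [case: (bd_grp s degb grb db i n) | rewrite addr0].
  apply/subsetP => x /imsetP [b Hb ->]; apply/imsetP; exists b => //.
  exact: (subsetP (bdS _ _ _ _ _ _)).
Qed.

Local Close Scope ring_scope.

Theorem proposition9 (V : finType) (K : {set {set V}})
  (mv : {set {set {set V}}})
  (d : Order.disp_t) (P : finPOrderType d) (mi : {set V} -> P)
  (Bb : finType) (degb : Bb -> int) (grb : Bb -> P) (db : Bb -> Bb -> 'F_2)
  (f : {set V} -> R) (fP : P -> R) (s : seq P) :
  is_simplicial_complex K ->
  is_multivector_field K mv ->
  is_Morse_decomposition K mv mi ->
  is_Conley_complex (@simp_deg V K) (@simp_gr V K d P mi) (@simp_bd V K)
    degb grb db ->
  is_Lyapunov K mi f fP ->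
  f_compatible fP s ->
  pm_isomorphic s (@simp_deg V K) (@simp_gr V K d P mi) (@simp_bd V K)
    degb grb db.
Proof.
move=> _ _ _ [_ [Hh _]] _ [_ [_ [Hidx _]]].
exact: main_gen Hidx Hh.
Qed.
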